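(* Let $G$ be a graph, $H$ a hole of $G$, $P$ an induced path of $G$, and $u,v$ two nonadjacent vertices of $H$ not on $P$, such that (i) $v$ is adjacent to no vertex of $P$, and (ii) some internal vertex of one of the two $(u,v)$-sections of $H$ and some internal vertex of the other $(u,v)$-section of $H$ are each adjacent to a vertex of $P$. Then $G$ has a hole which does not contain $u$, contains both edges of $H$ incident to $v$, and contains a vertex of $P$ not lying on $H$.
   Context: All graphs are finite and simple. A hole of a graph is an induced cycle of length at least $4$. For two vertices $u,v$ of a cycle $H$, the two $(u,v)$-sections of $H$ are the two $u$–$v$ paths into which $H$ is divided by $u$ and $v$. *)

(* Defs.v *)
From mathcomp Require Import all_boot.
Set Implicit Arguments. Unset Strict Implicit. Unset Printing Implicit Defensive.

Definition simple_graph (T : finType) (e : rel T) : Prop :=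
  symmetric e /\ irreflexive e.

(* A cycle is represented by the uniq sequence of its vertices in cyclic
   order; [next c x] / [prev c x] are the cyclic neighbours (path.v). *)
Definition hole (T : finType) (e : rel T) (c : seq T) : Prop :=
  [/\ uniq c, 4 <= size c &
      forall x y, x \in c -> y \in c ->
        e x y = (y == next c x) || (x == next c y)].

Definition cycle_edge (T : eqType) (c : seq T) (x y : T) : bool :=
  (x \in c) && (y \in c) && ((y == next c x) || (x == next c y)).

Definition induced_path (T : finType) (e : rel T) (p : seq T) : Prop :=
  uniq p /\
  forall x y, x \in p -> y \in p ->
    e x y = (index y p == (index x p).+1) || (index x p == (index y p).+1).

(* Internal vertices of the (u,v)-section of c that goes from u to v in the
   cyclic order of c ([arc c u v] starts at u and stops just before v). The
   two (u,v)-sections have internal vertices [section_int c u v] and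
   [section_int c v u]. *)
Definition section_int (T : eqType) (c : seq T) (u v : T) : seq T :=
  behead (arc c u v).

(* Main.v *)
Require Import Defs.
From mathcomp Require Import all_boot zify.
From Stdlib Require Import Classical.
Set Implicit Arguments. Unset Strict Implicit. Unset Printing Implicit Defensive.

Definition scc (k i : nat) := if i.+1 == k then 0 else i.+1.

Lemma eq_nth_idx (T : eqType) (d : T) (c : seq T) y j :
  uniq c -> y \in c -> j < size c -> (y == nth d c j) = (index y c == j).
Proof.
move=> Uc yc jc; apply/eqP/eqP => [->|<-]; first by rewrite index_uniq.
by rewrite nth_index.
Qed.

Lemma next_idx (T : eqType) (c : seq T) x y : uniq c -> x \in c -> y \in c ->
  (y == next c x) = (index y c == scc (size c) (index x c)).
Proof.
move=> Uc xc yc; rewrite next_nth xc /scc.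
case: c Uc xc yc => // h t Uc xc yc.
have := xc; rewrite -index_mem => hx; have {}hx : index x (h :: t) < (size t).+1 by [].
case: (ltnP (index x (h :: t)) (size t)) => Hi.
  have -> : (index x (h :: t)).+1 == (size t).+1 = false by apply/negbTE; lia.
  have -> : nth h t (index x (h :: t)) = nth h (h :: t) (index x (h :: t)).+1 by [].
  by rewrite eq_nth_idx.
have -> : index x (h :: t) = size t by lia.
rewrite eqxx nth_default //.
by rewrite -(eq_nth_idx h) //.
Qed.

Lemma hole_nth (T : finType) (e : rel T) (d : T) c :
  hole e c <-> [/\ uniq c, 4 <= size c &
    forall i j, i < size c -> j < size c ->
      e (nth d c i) (nth d c j) = (j == scc (size c) i) || (i == scc (size c) j)].
Proof.
split.
  case=> Uc sc Hc; split => // i j ic jc.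
  rewrite Hc ?mem_nth // !next_idx ?mem_nth // !index_uniq //.
case=> Uc sc Hc; split => // x y xc yc.
rewrite -(nth_index d xc) -(nth_index d yc) Hc ?index_mem //.
by rewrite !next_idx ?mem_nth ?index_mem // !index_uniq ?index_mem.
Qed.

Lemma hole_cycle_edge (T : finType) (e : rel T) c x y :
  hole e c -> x \in c -> y \in c -> cycle_edge c x y = e x y.
Proof. by case=> _ _ Hc xc yc; rewrite /cycle_edge xc yc Hc. Qed.

Lemma shortcut (T : Type) (d : T) (r : rel T) (l : seq T) i j :
  i.+1 < j -> j < size l -> r (nth d l i) (nth d l j) ->
  (forall k, k.+1 < size l -> r (nth d l k) (nth d l k.+1)) ->
  let l' := take i.+1 l ++ drop j l in
  [/\ size l' < size l, nth d l' 0 = nth d l 0,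
      nth d l' (size l').-1 = nth d l (size l).-1,
      (forall k, k < size l' -> exists2 m, m < size l & nth d l' k = nth d l m)
    & forall k, k.+1 < size l' -> r (nth d l' k) (nth d l' k.+1)].
Proof.
move=> ij jl rij Hl l'.
have sz : size l' = i.+1 + (size l - j).
  by rewrite /l' size_cat size_takel ?size_drop //; lia.
have nl : forall k, nth d l' k = if k < i.+1 then nth d l k else nth d l (j + (k - i.+1)).
  move=> k; rewrite /l' nth_cat size_takel; last lia.
  by case: ifP => kk; [rewrite nth_take | rewrite nth_drop].
split.
- rewrite sz; lia.
- by rewrite nl.
- rewrite nl sz; case: ifP => h; first lia.
  congr nth; lia.
- move=> k kl; rewrite nl; case: ifP => h.
    by exists k => //; lia.
  by exists (j + (k - i.+1)) => //; lia.
- move=> k kl; rewrite !nl.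
  case: ifP => h1; case: ifP => h2.
  + by apply: Hl; lia.
  + have -> : k = i by lia.
    by rewrite subnn addn0.
  + lia.
  + have -> : j + (k.+1 - i.+1) = (j + (k - i.+1)).+1 by lia.
    apply: Hl; lia.
Qed.

Ltac clr := repeat match goal with
  | H : forall _, _ |- _ => clear H
  | H : is_true (_ \in _) |- _ => clear H
  | H : is_true (_ \notin _) |- _ => clear H
  | H : is_true (~~ has _ _) |- _ => clear H
  | H : is_true (?x != _) |- _ => let t := type of x in tryif unify t nat then fail else clear H
  | H : hole _ _ |- _ => clear H
  | H : is_true (uniq _) |- _ => clear H
  end.
Ltac normsz := repeat (match goal with
 | |- context [@size ?t ?s] => let z := fresh "sz" in set z := @size t s in *; try clearbody z
 | H : context [@size ?t ?s] |- _ => let z := fresh "sz" in set z := @size t s in *; try clearbody z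
 | |- context [@index ?t ?x ?s] => let z := fresh "ix" in set z := @index t x s in *; try clearbody z
 | H : context [@index ?t ?x ?s] |- _ => let z := fresh "ix" in set z := @index t x s in *; try clearbody z
 end).
Ltac mlia := try (match goal with H : @size _ ?c = ?k |- _ => is_var k; rewrite ?H end); clr; try (cbn [Equality.sort fintype_Finite__to__eqtype_Equality] in * ); lia.
Ltac slia := rewrite /scc; repeat (case: ifP => ?); mlia.


Lemma hole_rot (T : finType) (e : rel T) H i : hole e H -> hole e (rot i H).
Proof.
case=> Uh sh Hh; split; rewrite ?rot_uniq ?size_rot //.
move=> x y; rewrite !mem_rot => xH yH; rewrite !next_rot //; exact: Hh.
Qed.

Lemma main (T : finType) (e : rel T) (s1 s2 P : seq T) (u v : T) :
  simple_graph e -> hole e (v :: s1 ++ u :: s2) -> induced_path e P ->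
  u \notin P -> v \notin P -> (forall x, x \in P -> ~~ e v x) ->
  forall a b x y, a \in s2 -> b \in s1 -> x \in P -> y \in P -> e a x -> e b y ->
  exists H', [/\ hole e H', u \notin H', cycle_edge H' v (next (v :: s1 ++ u :: s2) v),
     cycle_edge H' v (prev (v :: s1 ++ u :: s2) v) &
     exists z, [/\ z \in P, z \notin (v :: s1 ++ u :: s2) & z \in H']].
Proof.
move=> [sym irr] hc [UP HP] uP vP vnP a b x y as2 bs1 xP yP eax eby.
set c := v :: s1 ++ u :: s2 in hc *.
have hc' := hc; move/(hole_nth _ v): hc' => [Uc szc Hc].
set k := size c in szc Hc.
have kc : size c = k by [].
clearbody k.
have kE : k = size s1 + size s2 + 2 by rewrite -kc /c /= size_cat /= addn2 addnS.
have Uc' := Uc; rewrite /c /= cat_uniq /= mem_cat inE negb_or in Uc'.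
case/and5P: Uc' => /andP[vs1 /norP[vu vs2]] Us1 /norP[us1 hs12] us2 Us2.
have hs12' : forall z, z \in s2 -> z \notin s1.
  by move=> z zs2; apply/negP => zs1; move/hasP: hs12; apply; exists z.
have Hcc : forall x y, x \in c -> y \in c ->
    e x y = (index y c == scc k (index x c)) || (index x c == scc k (index y c)).
  move=> x' y' xc yc; rewrite -{1}(nth_index v xc) -{1}(nth_index v yc) Hc -?kc ?index_mem //.
pose N i := nth v c i.
have memN : forall i, i < k -> N i \in c by move=> i ik; apply: mem_nth; rewrite kc.
have idxN : forall i, i < k -> index (N i) c = i by move=> i ik; apply: index_uniq; rewrite ?kc.
have Nidx : forall z, z \in c -> N (index z c) = z by move=> z zc; apply: nth_index.
have idxk : forall z, z \in c -> index z c < k by move=> z zc; rewrite -kc index_mem.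
have uc : u \in c by rewrite /c inE mem_cat inE eqxx !orbT.
have iuE : index u c = (size s1).+1.
  by rewrite /c /= (negbTE vu) index_cat (negbTE us1) /= eqxx addn0.
have s1n : 0 < size s1 by case: (s1) bs1.
have s2n : 0 < size s2 by case: (s2) as2.
have ac : a \in c by rewrite /c inE mem_cat inE as2 !orbT.
have bc : b \in c by rewrite /c inE mem_cat bs1 !orbT.
have iaE : index u c < index a c.
  have va : v != a by apply/eqP => va; rewrite va as2 in vs2.
  have ua : u != a by apply/eqP => ua; rewrite ua as2 in us2.
  rewrite iuE /c /= (negbTE va) index_cat (negbTE (hs12' _ as2)) /= (negbTE ua); mlia.
have ibE : 0 < index b c < index u c.
  have vb : v != b by apply/eqP => vb; rewrite vb bs1 in vs1.
  rewrite iuE /c /= (negbTE vb) index_cat bs1 /=.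
  by rewrite ltnS index_mem.
set iu := index u c in iaE ibE iuE.
have iuD : index u c = iu by [].
clearbody iu.
have vc : v \in c by rewrite mem_head.
have iv : index v c = 0 by rewrite /c /= eqxx.
set n := next c v. set p := prev c v.
have nc : n \in c by rewrite mem_next.
have pc : p \in c by rewrite mem_prev.
have inE1 : index n c = 1.
  have := next_idx Uc vc nc; rewrite eqxx iv /scc => /esym/eqP ->.
  by case: ifP => //; mlia.
have ipE : index p c = k.-1.
  have := next_idx Uc pc vc; rewrite next_prev // eqxx iv /scc => /esym/eqP.
  have := idxk _ pc; case: ifP => //; mlia.
have evn : e v n by rewrite Hcc // iv inE1; slia.
have evp : e v p by rewrite Hcc // iv ipE; slia.
pose A z := ((z \in c) && (z != u) && (z != v)) || (z \in P).
pose eA : rel T := fun x y => [&& e x y, A x & A y].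
have symeA : symmetric eA.
  by move=> x' y'; rewrite /eA sym; case: (A x'); case: (A y'); rewrite ?andbT ?andbF.
have AN : forall i, 0 < i < k -> i != iu -> A (N i).
  move=> i /andP[i0 ik] iiu; apply/orP; left.
  rewrite memN //=; apply/andP; split; apply/eqP => h.
    by move: (idxN i ik); rewrite h iuD => h'; rewrite h' eqxx in iiu.
  by move: (idxN i ik); rewrite h iv; mlia.
have eNN : forall i, i.+1 < k -> e (N i) (N i.+1).
  move=> i ik; have ik' : i < k by mlia.
  rewrite Hcc ?memN ?idxN //; slia.
have nN : n = N 1 by rewrite -inE1 Nidx.
have pN : p = N k.-1 by rewrite -ipE Nidx.
have C1 : forall i, 0 < i < iu -> connect eA n (N i).
  elim=> [|j IH] // /andP[_ hi].
  case: (posnP j) => [->|ip]; first by rewrite nN connect0.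
  apply: connect_trans (IH _) _; first mlia.
  apply: connect1; rewrite /eA eNN ?AN //; mlia.
have C2 : forall d i, i + d = k.-1 -> iu < i -> connect eA (N i) p.
  elim=> [|d IH] i hd hi.
    by rewrite addn0 in hd; rewrite pN hd connect0.
  apply: connect_trans (IH i.+1 _ _); [|mlia|mlia].
  apply: connect1; rewrite /eA eNN ?AN //; mlia.
have Pe : forall i, i.+1 < size P -> e (nth v P i) (nth v P i.+1).
  move=> i ih; have ih' : i < size P by mlia.
  by rewrite HP ?mem_nth ?index_uniq // eqxx.
have CP0 : forall i, i < size P -> connect eA (nth v P 0) (nth v P i).
  elim=> [|i IH] hi; first exact: connect0.
  apply: connect_trans (IH _) _; first mlia.
  have hi' : i < size P by mlia.
  by apply: connect1; rewrite /eA Pe // /A !mem_nth ?orbT.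
have Csym := sym_connect_sym symeA.
have Cyx : connect eA y x.
  rewrite -(nth_index v yP) -(nth_index v xP).
  apply: connect_trans (CP0 _ _); last by rewrite index_mem.
  by rewrite Csym; apply: CP0; rewrite index_mem.
have Cnp : connect eA n p.
  apply: connect_trans (C1 (index b c) ibE) _.
  apply: connect_trans (connect1 (_ : eA _ y)) _.
    rewrite /eA Nidx // eby /A yP orbT andbT.
    have := AN (index b c); rewrite Nidx //; apply; have := idxk _ bc; mlia.
  apply: connect_trans Cyx _.
  apply: connect_trans (connect1 (_ : eA _ a)) _.
    apply/and3P; split; [by rewrite sym | by rewrite /A xP orbT | ].
    rewrite -(Nidx a ac); apply: AN; have := idxk _ ac; mlia.
  rewrite -(Nidx a ac); apply: (C2 (k.-1 - index a c)) => //.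
  have := idxk _ ac; mlia.
case/connectP: Cnp => q qpath qlast.
pose W l := [/\ 0 < size l, nth v l 0 = n, nth v l (size l).-1 = p,
   forall m, m < size l -> A (nth v l m) &
   forall m, m.+1 < size l -> e (nth v l m) (nth v l m.+1)].
have iu1 : 1 < iu by mlia.
have W0 : W (n :: q).
  split => //.
  - by rewrite /= qlast (last_nth v).
  - move=> [|m] hm.
      by rewrite /= nN; apply: AN; mlia.
    have hm' : m < size q by [].

    by have /and3P[_ _ h] := (pathP v qpath) m hm'.
  - move=> m hm; have hm' : m < size q by [] .
    by have /and3P[h _ _] := (pathP v qpath) m hm'.
have enp : e n p = false by rewrite Hcc // inE1 ipE; slia.
have nnp : n != p by apply/eqP => h; move: inE1; rewrite h ipE; mlia.
have AvE : forall z, A z -> e v z = (z == n) || (z == p).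
  move=> z /orP[/andP[/andP[zc zu] zv] | zP].
    have := idxk _ zc.
    rewrite Hcc // iv nN pN /N !(eq_nth_idx v Uc zc) ?kc; [|mlia|mlia].
    slia.
  have zn : (z == n) = false by apply/eqP => zn; move: (vnP z zP); rewrite zn evn.
  have zp : (z == p) = false by apply/eqP => zp; move: (vnP z zP); rewrite zp evp.
  by rewrite zn zp (negbTE (vnP z zP)).
suff main : forall m l, size l <= m -> W l ->
  exists H', [/\ hole e H', u \notin H', cycle_edge H' v n,
     cycle_edge H' v p & exists z, [/\ z \in P, z \notin c & z \in H']].
  exact: (main _ (n :: q) (leqnn _) W0).
elim=> [|m IH] l hl [l0 lf ll lA le]; first by mlia.
case: (classic (exists i j, [/\ i.+1 < j, j < size l & e (nth v l i) (nth v l j)]))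
  => [[i [j [ij jl eij]]]|nochord].
  have := shortcut ij jl eij le => /= [[sz' f' l' A' e']].
  apply: (IH (take i.+1 l ++ drop j l)); first mlia.
  split => //; [by rewrite size_cat size_takel; mlia | by rewrite f' | by rewrite l' | ].
  by move=> m' hm'; have [m2 hm2 ->] := A' m' hm'; exact: lA.
have CL : forall i j, i.+1 < j -> j < size l -> e (nth v l i) (nth v l j) = false.
  by move=> i j h1 h2; apply/negbTE/negP => h; apply: nochord; exists i, j.
have adjL : forall i j, i < size l -> j < size l ->
    e (nth v l i) (nth v l j) = (j == i.+1) || (i == j.+1).
  move=> i j il jl.
  case: (ltngtP i j) => h.
  - case: (eqVneq j i.+1) => [ej | ne].
      by rewrite ej le ?eqxx //; rewrite -ej.
    have h2 : i.+1 < j by mlia.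
    rewrite CL //; mlia.
  - case: (eqVneq i j.+1) => [ej | ne].
      by rewrite sym ej le ?eqxx ?orbT //; rewrite -ej.
    have h2 : j.+1 < i by mlia.
    rewrite sym CL //; mlia.
  - by rewrite h irr; mlia.
have noRep : forall i j, i < j -> j < size l -> nth v l i = nth v l j -> False.
  move=> i j ij jl h.
  case: (eqVneq j i.+1) => [ej | nej].
    by move: (le i); rewrite -ej h irr => /(_ jl).
  have ij2 : i.+1 < j by mlia.
  case: (ltnP j.+1 (size l)) => hj.
    have hh : i.+1 < j.+1 by mlia.
    by move: (CL i j.+1 hh hj); rewrite h le.
  have jE : j = (size l).-1 by mlia.
  case: i ij ij2 h nej => [|i'] ij ij2 h nej.
    by move: nnp; rewrite -lf -ll -jE h eqxx.
  have hh : i'.+1 < j by mlia.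
  by move: (CL i' j hh jl); rewrite -h le //; mlia.
have Ul : uniq l.
  apply/(uniqP v) => i j; rewrite !inE => il jl h.
  case: (ltngtP i j) => // hij.
    by case: (noRep i j hij jl h).
  by case: (noRep j i hij il (esym h)).
have sl3 : 2 < size l.
  case: (ltnP 2 (size l)) => // hs.
  case: (eqVneq (size l) 2) => [s2e | ns2].
    move: (le 0) ll; rewrite s2e lf /= => h ll'.
    by rewrite ll' enp in h; move: (h isT).
  have e0 : (size l).-1 = 0 by mlia.
  by move: nnp ll; rewrite e0 lf => nnp' ll'; rewrite ll' eqxx in nnp'.
have vl : v \notin l.
  apply/negP => vl; have := lA (index v l); rewrite index_mem vl nth_index //.
  by rewrite /A eqxx andbF /= (negbTE vP) => /(_ isT).
have hH' : hole e (v :: l).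
  apply/(hole_nth _ v); split.
  - by rewrite /= vl Ul.
  - by rewrite /=; mlia.
  move=> [|i] [|j] /= hi hj.
  - by rewrite irr; slia.
  - have hj' : j < size l by mlia.
    rewrite AvE ?lA // -{1}lf -ll !nth_uniq //; [|mlia].
    slia.
  - have hi' : i < size l by mlia.
    rewrite sym AvE ?lA // -{1}lf -ll !nth_uniq //; [|mlia].
    slia.
  - rewrite adjL; [slia|mlia|mlia].
exists (v :: l); split => //.
- rewrite inE negb_or eq_sym vu /=; apply/negP => ul.
  have := lA (index u l); rewrite index_mem ul nth_index //.
  by rewrite /A eqxx /= andbF /= (negbTE uP) => /(_ isT).
- rewrite (hole_cycle_edge hH') ?mem_head //.
  by rewrite inE -lf mem_nth ?orbT.
- rewrite (hole_cycle_edge hH') ?mem_head //.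
  by rewrite inE -ll mem_nth ?orbT //; mlia.
case: (boolP (all (fun z => (z \in c) && (z != u) && (z != v)) l)) => [allc | /allPn [z zl nz]].
  exfalso.
  have bnd : forall i, i < size l -> 0 < index (nth v l i) c < iu.
    elim=> [|i IHi] hi; first by rewrite lf inE1; mlia.
    have hi' : i < size l by mlia.
    have := IHi hi'.
    have /andP[/andP[z2c z2u] z2v] := (allP allc) _ (mem_nth v hi).
    have /andP[/andP[z1c z1u] z1v] := (allP allc) _ (mem_nth v hi').
    have h0 : index (nth v l i.+1) c != 0.
      by apply: contraNneq z2v => h; rewrite -(Nidx _ z2c) h.
    have hu : index (nth v l i.+1) c != iu.
      by apply: contraNneq z2u => h; rewrite -(Nidx _ z2c) h -iuD Nidx.
    have := idxk _ z2c.
    have := le i hi; rewrite Hcc //.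
    slia.
  have := bnd (size l).-1; rewrite ll ipE => /(_ _).
  have := idxk _ ac; mlia.
have zA : A z by rewrite -(nth_index v zl); apply: lA; rewrite index_mem.
case/orP: zA => [h | zP]; first by rewrite h in nz.
exists z; split => //; last by rewrite inE zl orbT.
apply/negP => zc; apply: (negP nz); rewrite zc /=.
by apply/andP; split; apply/eqP => h; move: zP; rewrite h ?(negbTE uP) ?(negbTE vP).
Qed.

Theorem lemma2p2 (T : finType) (e : rel T) (H P : seq T) (u v : T) :
  simple_graph e ->
  hole e H ->
  induced_path e P ->
  u \in H -> v \in H -> u != v -> ~~ e u v ->
  u \notin P -> v \notin P ->
  (forall x, x \in P -> ~~ e v x) ->
  (exists a b x y,
      [/\ a \in section_int H u v, b \in section_int H v u,
          x \in P, y \in P & e a x && e b y]) ->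
  exists H' : seq T,
    [/\ hole e H', u \notin H',
        cycle_edge H' v (next H v), cycle_edge H' v (prev H v) &
        exists z, [/\ z \in P, z \notin H & z \in H']].
Proof.
move=> Hs hH HP uH vH uv nuv uP vP vnP [a [b [x [y [aS bS xP yP /andP[eax eby]]]]]].
have Uh : uniq H by case: hH.
have vu : v != u by rewrite eq_sym.
case: (rot_to_arc Uh vH uH vu) => i s1 s2 arc1 arc2 rotE.
have as2 : a \in s2 by move: aS; rewrite /section_int -arc2.
have bs1 : b \in s1 by move: bS; rewrite /section_int -arc1.
have hR : hole e (v :: s1 ++ u :: s2) by rewrite -rotE; apply: hole_rot.
have [H' [h1 h2 h3 h4 [z [zP zc zH']]]] :=
  main Hs hR HP uP vP vnP as2 bs1 xP yP eax eby.
exists H'; split => //.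
- by move: h3; rewrite -rotE next_rot.
- by move: h4; rewrite -rotE prev_rot.
- by exists z; split => //; move: zc; rewrite -rotE mem_rot.
Qed.
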